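(* Let $G=(V,E)$ be an undirected graph and $\mathcal{A}$ an abelian group. Then the Vietoris-Rips homology $H_*^{VR}(G;\mathcal{A})$ of $G$ is isomorphic to the Vietoris-Rips homology $H_*^{VR}(\sigma(G);\mathcal{A})$ of the semi-uniform space $\sigma(G)$.
   Context: The Vietoris-Rips homology $H_*^{VR}(G;\mathcal{A})$ of a graph $G=(V,E)$ is the simplicial homology with coefficients in $\mathcal{A}$ of its clique (flag) complex: the simplicial complex on vertex set $V$ whose simplices are the finite sets of pairwise adjacent vertices. A semi-uniform structure on a set $X$ is a filter $\mathcal{U}$ on $X\times X$ (nonempty, not containing $\emptyset$, closed under supersets and finite intersections) such that every $U\in\mathcal{U}$ contains the diagonal and $U^{-1}=\{(y,x):(x,y)\in U\}\in\mathcal{U}$ for all $U\in\mathcal{U}$. $\sigma(G)=(V,\mathcal{E}_G)$, where $\mathcal{E}_G$ is the filter on $V\times V$ generated by $E\cup\Delta_V$ (edges regarded as symmetric pairs). For $U\in\mathcal{U}$, $X^U$ is the simplicial set with $X^U_n=\{(x_0,\dots,x_n)\in X^{n+1}:(x_i,x_j)\in U\text{ for all }i<j\}$ (entries need not be distinct), face maps $\partial_i$ deleting the $i$-th entry and degeneracies repeating it; $H_*(X^U;\mathcal{A})$ is the homology of $C_*(X^U)\otimes\mathcal{A}$ with $C_n(X^U)$ free abelian on $X^U_n$ and differential $\sum_i(-1)^i\partial_i$. Ordering $\mathcal{U}$ by $U\le U'$ iff $U'\subseteq U$, the Vietoris-Rips homology of $(X,\mathcal{U})$ is $H^{VR}_*(X;\mathcal{A})=\varprojlim_{U\in\mathcal{U}}H_*(X^U;\mathcal{A})$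 along maps induced by the inclusions $X^{U'}\subset X^U$ for $U'\subseteq U$. *)

(* Defs.v *)
From HB Require Import structures.
From mathcomp Require Import all_boot all_order all_algebra all_fingroup.
From mathcomp Require Import boolp classical_sets cardinality fsbigop.
Set Implicit Arguments.
Unset Strict Implicit.
Unset Printing Implicit Defensive.
Import GRing.Theory.
Local Open Scope ring_scope.
Local Open Scope classical_set_scope.

(* Abelian groups presented as (sub)setoids: the group is the set of   *)
(* carriers satisfying [sg_mem], modulo the equivalence [sg_eqv], with *)
(* pointwise addition [sg_add].  Homology groups and their inverse     *)
(* limits are presented this way (cycles modulo boundaries).           *)
Record sgroup := SGroup {
  sg_car : Type;
  sg_mem : sg_car -> Prop;
  sg_eqv : sg_car -> sg_car -> Prop;
  sg_add : sg_car -> sg_car -> sg_car }.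
Arguments sg_mem : clear implicits.
Arguments sg_eqv : clear implicits.
Arguments sg_add : clear implicits.

Definition sg_iso (G H : sgroup) : Prop :=
  exists (f : sg_car G -> sg_car H) (g : sg_car H -> sg_car G),
  [/\ (forall x, sg_mem G x -> sg_mem H (f x)) /\
      (forall y, sg_mem H y -> sg_mem G (g y)),
      (forall x x', sg_mem G x -> sg_mem G x' -> sg_eqv G x x' ->
                    sg_eqv H (f x) (f x')),
      (forall y y', sg_mem H y -> sg_mem H y' -> sg_eqv H y y' ->
                    sg_eqv G (g y) (g y')) /\
      (forall x x', sg_mem G x -> sg_mem G x' ->
          sg_eqv H (f (sg_add G x x')) (sg_add H (f x) (f x'))),
      (forall x, sg_mem G x -> sg_eqv G (g (f x)) x) &
      (forall y, sg_mem H y -> sg_eqv H (f (g y)) y)].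

(* Chains with coefficients in A: an element of C_n ⊗ A, with C_n free  *)
(* on a set S of generators, is a finitely supported function S -> A.  *)
Definition fin_supp (T : Type) (A : zmodType) (c : T -> A) : Prop :=
  finite_set [set x | c x != 0].

Definition chain_sub (T : Type) (A : zmodType) (c c' : T -> A) : T -> A :=
  fun x => c x - c' x.

Definition chain_add (T : Type) (A : zmodType) (c c' : T -> A) : T -> A :=
  fun x => c x + c' x.

Definition homologous (T T1 : Type) (A : zmodType)
    (adm1 : (T1 -> A) -> Prop) (bd : (T1 -> A) -> (T -> A)) (c c' : T -> A) :=
  exists b, adm1 b /\ chain_sub c c' = bd b.

(* n-chains live on (n+1)-tuples; bd m : (m+1)-chains -> m-chains *)
Definition is_cycle (X : Type) (A : zmodType)
    (bd : forall m, (m.+2.-tuple X -> A) -> (m.+1.-tuple X -> A)) (n : nat) :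
    (n.+1.-tuple X -> A) -> Prop :=
  match n return (n.+1.-tuple X -> A) -> Prop with
  | 0 => fun _ => True
  | m.+1 => fun c => bd m c = (fun _ => 0)
  end.

Definition tins (X : Type) (n : nat) (i : 'I_n.+2) (v : X) (y : n.+1.-tuple X) :
    n.+2.-tuple X :=
  [tuple match unlift i j with Some k => tnth y k | None => v end | j < n.+2].

Definition signz (A : zmodType) (b : bool) (a : A) : A := if b then - a else a.

Definition VRsimplex (X : Type) (U : set (X * X)) (n : nat) (x : n.+1.-tuple X) :=
  forall i j : 'I_n.+1, (i < j)%N -> U (tnth x i, tnth x j).

Definition VRadm (X : Type) (A : zmodType) (U : set (X * X)) (n : nat)
    (c : n.+1.-tuple X -> A) : Prop :=
  fin_supp c /\ forall x, c x != 0 -> VRsimplex U x.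

(* differential sum_i (-1)^i ∂_i, ∂_i deleting the i-th entry; written on
   coefficients: (bd c)(y) = sum_i sum_{x, ∂_i x = y} (-1)^i c(x) *)
Definition VRbd (X : Type) (A : zmodType) (n : nat) (c : n.+2.-tuple X -> A) :
    n.+1.-tuple X -> A :=
  fun y => \sum_(i < n.+2)
             \sum_(v \in [set: {classic X}]) signz (odd i) (c (tins i (v : X) y)).

Definition VRhom (X : Type) (A : zmodType) (U : set (X * X)) (n : nat) : sgroup :=
  @SGroup (n.+1.-tuple X -> A)
    (fun c => VRadm U c /\ is_cycle (@VRbd X A) c)
    (homologous (@VRadm X A U n.+1) (@VRbd X A n))
    (@chain_add _ A).

(* Vietoris-Rips homology H_n^VR(X; A) = lim_{U ∈ 𝒰} H_n(X^U; A), with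
   bonding maps induced by X^{U'} ⊂ X^U for U' ⊆ U.  An element is a
   compatible family of homology classes, represented by cycles. *)
Definition VRhomology (X : Type) (UU : set (set (X * X))) (A : zmodType)
    (n : nat) : sgroup :=
  @SGroup (set (X * X) -> n.+1.-tuple X -> A)
    (fun F => (forall U, UU U -> sg_mem (VRhom A U n) (F U)) /\
              (forall U U', UU U -> UU U' -> U' `<=` U ->
                   sg_eqv (VRhom A U n) (F U') (F U)))
    (fun F F' => forall U, UU U -> sg_eqv (VRhom A U n) (F U) (F' U))
    (fun F F' U => chain_add (F U) (F' U)).

(* A semi-uniform structure (not needed for the statement; for reference) *)
Definition semi_uniform (X : Type) (UU : set (set (X * X))) : Prop :=
  [/\ UU !=set0 /\ ~ UU set0,
      (forall U U', UU U -> U `<=` U' -> UU U'),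
      (forall U U', UU U -> UU U' -> UU (U `&` U')),
      (forall U x, UU U -> U (x, x)) &
      (forall U, UU U -> UU [set p | U (p.2, p.1)])].

(* σ(G): the filter on V × V generated by E ∪ Δ_V (edges as symmetric pairs) *)
Definition sigmaG (V : Type) (adj : V -> V -> Prop) : set (set (V * V)) :=
  [set U | forall x y, adj x y \/ x = y -> U (x, y)].

(* Simplicial homology of the clique complex, with oriented chains:
   C_n(K) ⊗ A is modelled as the finitely supported A-valued functions on
   ordered n-simplices (tuples of n+1 distinct pairwise adjacent vertices)
   which are alternating: c(x∘s) = sign(s) c(x). *)
Definition clique (V : Type) (adj : V -> V -> Prop) (n : nat) (x : n.+1.-tuple V) :=
  forall i j : 'I_n.+1, i != j -> tnth x i <> tnth x j /\ adj (tnth x i) (tnth x j).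

Definition tperm_tuple (V : Type) (n : nat) (s : 'S_n.+1) (x : n.+1.-tuple V) :
    n.+1.-tuple V := [tuple tnth x (s i) | i < n.+1].

Definition CLadm (V : Type) (A : zmodType) (adj : V -> V -> Prop) (n : nat)
    (c : n.+1.-tuple V -> A) : Prop :=
  [/\ fin_supp c,
      (forall x, c x != 0 -> clique adj x) &
      (forall (s : 'S_n.+1) x, c (tperm_tuple s x) = signz (odd_perm s) (c x))].

(* oriented boundary ∂[v_0,...,v_n] = sum_i (-1)^i [v_0,..,^v_i,..,v_n],
   written on alternating coefficient functions: (∂c)(y) = sum_v c(v :: y) *)
Definition CLbd (V : Type) (A : zmodType) (n : nat) (c : n.+2.-tuple V -> A) :
    n.+1.-tuple V -> A :=
  fun y => \sum_(v \in [set: {classic V}]) c (cons_tuple (v : V) y).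

Definition VRhomology_graph (V : Type) (adj : V -> V -> Prop) (A : zmodType)
    (n : nat) : sgroup :=
  @SGroup (n.+1.-tuple V -> A)
    (fun c => CLadm adj c /\ is_cycle (@CLbd V A) c)
    (homologous (@CLadm V A adj n.+1) (@CLbd V A n))
    (@chain_add _ A).

(* Main.v *)
Set Warnings "-notation-overridden -ambiguous-paths -notation-incompatible-prefix".
Require Import Defs.
From mathcomp Require Import all_boot all_order all_algebra all_fingroup.
From mathcomp Require Import boolp classical_sets cardinality fsbigop.
From mathcomp Require wochoice.
From mathcomp Require Import finmap zify.
Set Implicit Arguments. Unset Strict Implicit. Unset Printing Implicit Defensive.
Import GRing.Theory.
Local Open Scope ring_scope.
Local Open Scope classical_set_scope.

Section Basics.
Variable A : zmodType.

Lemma signzN b (a : A) : signz b (- a) = - signz b a.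
Proof. by case: b. Qed.
Lemma signzD b (a a' : A) : signz b (a + a') = signz b a + signz b a'.
Proof. by case: b => //=; rewrite opprD. Qed.
Lemma signz0 b : signz b (0 : A) = 0.
Proof. by case: b => //=; rewrite oppr0. Qed.
Lemma signzK b (a : A) : signz b (signz b a) = a.
Proof. by case: b => //=; rewrite opprK. Qed.
Lemma signz_addb b b' (a : A) : signz (b (+) b') a = signz b (signz b' a).
Proof. by case: b; case: b' => //=; rewrite opprK. Qed.
Lemma signz_sum b (I : Type) (r : seq I) (P : pred I) (F : I -> A) :
  signz b (\sum_(i <- r | P i) F i) = \sum_(i <- r | P i) signz b (F i).
Proof. by case: b => //=; rewrite -sumrN. Qed.
Lemma signz_eq0 b (a : A) : (signz b a == 0) = (a == 0).
Proof. by case: b => //=; rewrite oppr_eq0. Qed.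
Lemma signzB b (a a' : A) : signz b (a - a') = signz b a - signz b a'.
Proof. by rewrite signzD signzN. Qed.

Lemma fsE (I : choiceType) (F : I -> A) (r : seq I) : uniq r ->
  (forall i, i \notin r -> F i = 0) -> \sum_(i \in [set: I]) F i = \sum_(i <- r) F i.
Proof.
move=> ur Fr; rewrite (fsbigE r) //; last by move=> i _ /Fr.
by apply: eq_bigl => i; rewrite in_setT.
Qed.

Lemma fin_supp_list (I : choiceType) (c : I -> A) :
  fin_supp c -> exists r : seq I, uniq r /\ forall x, c x != 0 -> x \in r.
Proof.
move=> fc; exists (fset_set [set x | c x != 0] : seq I); split; first exact: fset_uniq.
by move=> x cx; rewrite in_fset_set //; apply: mem_set.
Qed.

Lemma list_fin_supp (I : choiceType) (c : I -> A) (r : seq I) :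
  (forall x, c x != 0 -> x \in r) -> fin_supp c.
Proof.
move=> H; apply: (sub_finite_set _ (finite_seq r)) => x /= cx; exact: H.
Qed.

End Basics.

Section Tuples.
Variable T : choiceType.

Fixpoint tw (W : seq T) n : seq (n.-tuple T) :=
  match n with
  | 0 => [:: [tuple]]
  | m.+1 => [seq cons_tuple v t | v <- W, t <- tw W m]
  end.

Lemma tw_mem (W : seq T) n (z : n.-tuple T) :
  (forall k, tnth z k \in W) -> z \in tw W n.
Proof.
elim: n z => [|n IH] z Hz /=; first by rewrite tuple0 inE.
case/tupleP: z Hz => x t Hz.
apply: (allpairs_f (fun v (t : n.-tuple T) => cons_tuple v t)).
  exact: (Hz ord0).
apply: IH => k; have := Hz (lift ord0 k); by rewrite tnthS.
Qed.

Lemma vert_fin_supp (A : zmodType) n (c : n.-tuple T -> A) (W : seq T) :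
  (forall z, c z != 0 -> forall k, tnth z k \in W) -> fin_supp c.
Proof. move=> H; apply: (list_fin_supp (r := tw W n)) => z /H; exact: tw_mem. Qed.

Lemma fin_supp_vert (A : zmodType) n (c : n.-tuple T -> A) :
  fin_supp c -> exists W : seq T, uniq W /\ forall z, c z != 0 -> forall k, tnth z k \in W.
Proof.
case/fin_supp_list => r [_ Hr]; exists (undup (flatten [seq val z | z <- r])).
split; first exact: undup_uniq.
move=> z /Hr zr k; rewrite mem_undup; apply/flattenP.
exists (val z); first by apply: map_f.
exact: mem_tnth.
Qed.

End Tuples.

Section Order.
Variable V : Type.
Local Notation T := {classic V}.

Definition R0 : rel T := sval (wochoice.well_ordering_principle T).

Lemma R0_min (P : {pred T}) a : a \in P -> exists z, [/\ z \in P,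
  (forall x, x \in P -> R0 z x) &
  (forall z', z' \in P -> (forall x, x \in P -> R0 z' x) -> z' = z)].
Proof.
move=> aP; have [z [[zP lb] un]] := svalP (wochoice.well_ordering_principle T) P
  (ex_intro _ a aP).
exists z; split => // z' z'P lb'; apply/esym/un; split => //.
Qed.

Lemma R0_refl a : R0 a a.
Proof.
have aP : a \in pred1 a by rewrite inE; apply/eqP.
have [z [zP lb _]] := R0_min aP.
by move: zP; rewrite inE => /eqP zE; move: (lb a aP); rewrite zE.
Qed.

Lemma R0_total a b : R0 a b || R0 b a.
Proof.
have aP : a \in pred2 a b by apply/pred2P; left.
have bP : b \in pred2 a b by apply/pred2P; right.
have [z [zP lb _]] := R0_min aP.
case/pred2P: zP => zE; subst z.
  by rewrite (lb b bP).
by rewrite (lb a aP) orbT.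
Qed.

Lemma R0_anti a b : R0 a b -> R0 b a -> a = b.
Proof.
move=> ab ba.
have aP : a \in pred2 a b by apply/pred2P; left.
have bP : b \in pred2 a b by apply/pred2P; right.
have [z [zP lb un]] := R0_min aP.
have Ha : forall x, x \in pred2 a b -> R0 a x.
  by move=> x /pred2P[] ->; [exact: R0_refl | exact: ab].
have Hb : forall x, x \in pred2 a b -> R0 b x.
  by move=> x /pred2P[] ->; [exact: ba | exact: R0_refl].
by rewrite (un a aP Ha) (un b bP Hb).
Qed.

Lemma R0_trans a b c : R0 a b -> R0 b c -> R0 a c.
Proof.
move=> ab bc.
pose P : {pred T} := fun x => `[< x = a \/ x = b \/ x = c >].
have aP : a \in P by rewrite unfold_in; apply/asboolP; left.
have bP : b \in P by rewrite unfold_in; apply/asboolP; right; left.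
have cP : c \in P by rewrite unfold_in; apply/asboolP; right; right.
have [z [zP lb un]] := R0_min aP.
move: zP; rewrite unfold_in => /asboolP[|[]] zE; rewrite zE in lb.
- exact: lb.
- by rewrite (R0_anti ab (lb a aP)).
- by rewrite -(R0_anti bc (lb b bP)).
Qed.

Definition lt (a b : T) : bool := (a != b) && R0 a b.

Lemma lt_irr : irreflexive lt.
Proof. by move=> a; rewrite /lt eqxx. Qed.

Lemma lt_asym a b : lt a b -> lt b a -> False.
Proof.
move=> /andP[ab Rab] /andP[_ Rba]; move: ab; by rewrite (R0_anti Rab Rba) eqxx.
Qed.

Lemma lt_trans : transitive lt.
Proof.
move=> b a c /andP[ab Rab] /andP[bc Rbc]; apply/andP; split; last exact: R0_trans Rbc.
apply/eqP => ac; subst c; move: bc; by rewrite (R0_anti Rab Rbc) eqxx.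
Qed.

Lemma lt_total a b : a != b -> lt a b || lt b a.
Proof.
move=> ab; rewrite /lt ab eq_sym ab /=; exact: R0_total.
Qed.

Definition incr n (x : n.-tuple T) : bool := pairwise lt x.

Lemma sort_exists n (x : n.+1.-tuple T) : uniq x ->
  exists s : 'S_n.+1, incr (tperm_tuple s x).
Proof.
move=> ux.
have /tuple_permP [p Hp] : perm_eq (sort R0 x) x by rewrite perm_sort.
exists p; rewrite /incr /tperm_tuple -Hp.
have ss : sorted R0 (sort R0 x) by apply: sort_sorted; exact: R0_total.
have us : uniq (sort R0 x) by rewrite sort_uniq.
rewrite sorted_pairwise in ss; last by move=> b a c; apply: R0_trans.
have : pairwise (SimplRel (fun a b : T => (a != b) && R0 a b)) (sort R0 x).
  by rewrite pairwise_relI ss andbT -uniq_pairwise.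
by [].
Qed.

Lemma sort_unique n (x : n.+1.-tuple T) (s s' : 'S_n.+1) : uniq x ->
  incr (tperm_tuple s x) -> incr (tperm_tuple s' x) -> s = s'.
Proof.
move=> ux i1 i2.
have pe : forall s0 : 'S_n.+1, perm_eq (tperm_tuple s0 x) x.
  by move=> s0; apply/tuple_permP; exists s0.
have E : val (tperm_tuple s x) = val (tperm_tuple s' x).
  apply: (pairwise_eq _ i1 i2).
    by move=> a b /andP[h1 h2]; case: (lt_asym h1 h2).
  by apply: (perm_trans (pe s)); rewrite perm_sym.
apply/permP => i.
have : tnth (tperm_tuple s x) i = tnth (tperm_tuple s' x) i.
  by rewrite (tnth_nth (tnth x i) (tperm_tuple s x)) (tnth_nth (tnth x i) (tperm_tuple s' x)) E.
move/tuple_uniqP: ux => ux'; by rewrite !tnth_mktuple => /ux' ->.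
Qed.

Lemma tins_seq n (i : 'I_n.+2) (v : T) (y : n.+1.-tuple T) :
  val (tins i v y) = take i y ++ v :: drop i y.
Proof.
have il0 : (i <= n.+1)%N by rewrite -ltnS.
have il : (i <= size y)%N by rewrite size_tuple.
apply: (@eq_from_nth _ v).
  by rewrite size_tuple size_cat /= size_takel // size_drop size_tuple; lia.
move=> k; rewrite size_tuple => kl.
have -> : nth v (tins i v y) k = tnth (tins i v y) (Ordinal kl) by rewrite (tnth_nth v).
rewrite /tins tnth_mktuple.
case: unliftP => [j eqk|eqk]; rewrite ?(tnth_nth v) nth_cat size_takel //.
- have /(congr1 val) /= -> := eqk; rewrite /bump.
  case: (leqP i j) => ij.
    rewrite add1n ltnNge (leq_trans ij (leqnSn _)) /= subSn //= nth_drop subnKC //.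
  by rewrite add0n ij nth_take.
- have /(congr1 val) /= -> := eqk; by rewrite ltnn subnn.
Qed.

Lemma tins_perm n (i : 'I_n.+2) (v : T) (s : 'S_n.+1) (y : n.+1.-tuple T) :
  tins i v (tperm_tuple s y) = tperm_tuple (lift_perm i ord0 s) (cons_tuple v y).
Proof.
apply: eq_from_tnth => j; rewrite /tins !tnth_mktuple.
case: unliftP => [k ->|->]; first by rewrite lift_perm_lift tnthS tnth_mktuple.
by rewrite lift_perm_id.
Qed.

Lemma tins0 n (v : T) (y : n.+1.-tuple T) : tins ord0 v y = cons_tuple v y.
Proof. by apply: val_inj; rewrite tins_seq take0 drop0. Qed.

Lemma tinsS n (j : 'I_n.+2) (v : T) (y : n.+2.-tuple T) :
  tins (lift ord0 j) v y = cons_tuple (thead y) (tins j v (behead_tuple y)).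
Proof.
apply: val_inj; rewrite tins_seq.
have -> : val (cons_tuple (thead y) (tins j v (behead_tuple y))) =
  thead y :: val (tins j v (behead_tuple y)) by [].
rewrite tins_seq; by case/tupleP: y => x t.
Qed.

Lemma incr_tins_incr n (i : 'I_n.+2) (v : T) (y : n.+1.-tuple T) :
  incr (tins i v y) -> incr y.
Proof.
rewrite /incr tins_seq pairwise_cat /= allrel_consr => /and3P[/andP[_ h1] h2 /andP[_ h3]].
by rewrite -(cat_take_drop i y) pairwise_cat h1 h2 h3.
Qed.

Lemma incr_tins_uniq n (i j : 'I_n.+2) (v : T) (y : n.+1.-tuple T) :
  incr (tins i v y) -> incr (tins j v y) -> i = j.
Proof.
wlog ij : i j / (i < j)%N.
  move=> H h1 h2; case: (ltngtP i j) => c; first exact: H.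
    by apply/esym/H.
  exact: val_inj.
rewrite /incr !tins_seq !pairwise_cat /= => /and3P[_ _ /andP[h1 _]] /and3P[h2 _ _].
have iy : (i < size y)%N by rewrite size_tuple; have := ltn_ord j; lia.
have e1 : nth v y i \in drop i y.
  have -> : nth v y i = nth v (drop i y) 0 by rewrite nth_drop addn0.
  by apply: mem_nth; rewrite size_drop subn_gt0.
have jy : (j <= size y)%N by rewrite size_tuple; have := ltn_ord j; lia.
have e2 : nth v y i \in take j y.
  have -> : nth v y i = nth v (take j y) i by rewrite nth_take.
  by apply: mem_nth; rewrite size_takel.
move: h2; rewrite allrel_consr => /andP[/allP/(_ _ e2) l1 _].
move/allP: h1 => /(_ _ e1) l2.
case: (lt_asym l1 l2).
Qed.

Lemma incr_ins_exists (s : seq T) (v : T) : pairwise lt s -> v \notin s ->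
  exists2 i, (i <= size s)%N & pairwise lt (take i s ++ v :: drop i s).
Proof.
elim: s => [|a s IH] /=; first by exists 0%N.
rewrite inE negb_or => /andP[alls ps] /andP[va vs].
case/orP: (lt_total va) => [lva|lav].
  exists 0%N => //=; rewrite alls ps lva /= andbT.
  by apply/allP => x xs; apply: (lt_trans lva); move/allP: alls; apply.
have [i il Hi] := IH ps vs.
exists i.+1 => //=; rewrite Hi andbT all_cat /= lav /=.
by rewrite -{1}(cat_take_drop i s) all_cat in alls.
Qed.

Lemma incr_tins_exists n (v : T) (y : n.+1.-tuple T) : incr y -> v \notin y ->
  exists i : 'I_n.+2, incr (tins i v y).
Proof.
move=> iy vy; have [i il Hi] := incr_ins_exists iy vy.
have il' : (i < n.+2)%N by rewrite size_tuple in il.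
by exists (Ordinal il'); rewrite /incr tins_seq.
Qed.

End Order.

Lemma sum_neq0 (A : zmodType) (I : Type) (r : seq I) (P : pred I) (F : I -> A) :
  \sum_(i <- r | P i) F i != 0 -> exists i, F i != 0.
Proof.
move=> H; apply: contrapT => nE; move: H; rewrite big1 ?eqxx // => i _.
apply: contrapT => Fi; apply: nE; exists i; exact/eqP.
Qed.

Lemma perm_split (A : zmodType) n (F : 'S_n.+2 -> A) :
  \sum_(t : 'S_n.+2) F t = \sum_(i : 'I_n.+2) \sum_(s : 'S_n.+1) F (lift_perm i ord0 s).
Proof.
rewrite (partition_big (fun t : 'S_n.+2 => (t^-1)%g ord0) predT) //=.
apply: eq_bigr => i0 _.
rewrite (reindex (lift_perm i0 ord0)); last first.
  pose ulsf i (s : 'S_n.+2) k := odflt k (unlift (s i) (s (lift i k))).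
  have ulsfK i (s : 'S_n.+2) k: lift (s i) (ulsf i s k) = s (lift i k).
    rewrite /ulsf; have:= neq_lift i k.
    by rewrite -(can_eq (permK s)) => /unlift_some[] ? ? ->.
  have inj_ulsf: injective (ulsf i0 _).
    move=> s; apply: can_inj (ulsf (s i0) s^-1%g) _ => k'.
    by rewrite {1}/ulsf ulsfK !permK liftK.
  exists (fun s => perm (inj_ulsf s)) => [s _ | s].
    by apply/permP=> k'; rewrite permE /ulsf lift_perm_lift lift_perm_id liftK.
  move/eqP => si0; have {}si0 : s i0 = ord0 by rewrite -si0 permKV.
  apply/permP=> k.
  case: (unliftP i0 k) => [k'|] ->; rewrite ?lift_perm_id //.
  by rewrite lift_perm_lift -si0 permE ulsfK.
apply: eq_bigl => s; apply/eqP.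
by rewrite -{2}(lift_perm_id i0 ord0 s) permK.
Qed.

Section Main.
Variable V : Type.
Local Notation T := {classic V}.
Variable adj : V -> V -> Prop.
Hypothesis adj_sym : forall x y, adj x y -> adj y x.
Variable A : zmodType.

Definition E0 : set (V * V) := fun p => adj p.1 p.2 \/ p.1 = p.2.

Definition piC n (c : n.+1.-tuple T -> A) : n.+1.-tuple T -> A := fun x =>
  if `[< clique adj x >] then
    \sum_(s : 'S_n.+1) signz (odd_perm s) (c (tperm_tuple s x)) else 0.

Definition iota n (c : n.+1.-tuple T -> A) : n.+1.-tuple T -> A := fun x =>
  if incr x then c x else 0.

Lemma clique_uniq n (x : n.+1.-tuple T) : clique adj x -> uniq x.
Proof.
move=> cx; apply/tuple_uniqP => i j E; apply: contrapT => /eqP ij.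
by case: (cx i j ij).
Qed.

Lemma tpermM n (s t : 'S_n.+1) (x : n.+1.-tuple T) :
  tperm_tuple s (tperm_tuple t x) = tperm_tuple (s * t)%g x.
Proof. by apply: eq_from_tnth => i; rewrite !tnth_mktuple permM. Qed.

Lemma tperm1 n (x : n.+1.-tuple T) : tperm_tuple 1%g x = x.
Proof. by apply: eq_from_tnth => i; rewrite !tnth_mktuple perm1. Qed.

Lemma clique_perm n (s : 'S_n.+1) (x : n.+1.-tuple T) :
  clique adj x -> clique adj (tperm_tuple s x).
Proof.
move=> cx i j ij; rewrite !tnth_mktuple; apply: cx.
by rewrite (inj_eq perm_inj).
Qed.

Lemma clique_permE n (s : 'S_n.+1) (x : n.+1.-tuple T) :
  clique adj (tperm_tuple s x) <-> clique adj x.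
Proof.
split; last exact: clique_perm.
by move/(clique_perm (s^-1)%g); rewrite tpermM mulVg tperm1.
Qed.

Lemma clique_cons n (v : T) (y : n.+1.-tuple T) :
  clique adj (cons_tuple v y) -> clique adj y.
Proof.
move=> cx i j ij; have := cx (lift ord0 i) (lift ord0 j).
by rewrite !tnthS (inj_eq (@lift_inj _ ord0)); apply.
Qed.

Lemma tins_tnth n (i : 'I_n.+2) (v : T) (y : n.+1.-tuple T) : tnth (tins i v y) i = v.
Proof. by rewrite tnth_mktuple unlift_none. Qed.

Lemma tnth_perm_mem n (s : 'S_n.+1) (x : n.+1.-tuple T) k :
  tnth x k = tnth (tperm_tuple s x) ((s^-1)%g k).
Proof. by rewrite tnth_mktuple permKV. Qed.

Lemma iota_fin n (c : n.+1.-tuple T -> A) : fin_supp c -> fin_supp (iota c).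
Proof.
move=> fc; apply: (sub_finite_set _ fc) => x /=; rewrite /iota.
by case: ifP => //; rewrite eqxx.
Qed.

Lemma iota_adm n (c : n.+1.-tuple T -> A) U : CLadm adj c -> sigmaG adj U ->
  VRadm U (iota c).
Proof.
case=> fc cc _ sU; split; first exact: iota_fin.
move=> x; rewrite /iota; case: ifP => _; last by rewrite eqxx.
move=> /cc cx i j ij; apply: sU; left; apply: (proj2 (cx i j _)).
by rewrite neq_ltn ij.
Qed.

Lemma count_ins n (v : T) (y : n.+1.-tuple T) (X : A) : v \notin y ->
  \sum_(i < n.+2) (if incr (tins i v y) then X else 0) = if incr y then X else 0.
Proof.
move=> vy; case: ifP => iy; last first.
  by apply: big1 => i _; case: ifP => // H; move: iy; rewrite (incr_tins_incr H).
have [i0 H0] := incr_tins_exists iy vy.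
rewrite (bigD1 i0) //= H0 big1 ?addr0 // => i ii0.
by case: ifP => // Hi; move: ii0; rewrite (incr_tins_uniq Hi H0) eqxx.
Qed.

Lemma iota_bd n (c : n.+2.-tuple T -> A) : CLadm adj c ->
  VRbd (iota c) = iota (CLbd c).
Proof.
case=> fc cc ac; apply: funext => y.
have [W [uW HW]] := @fin_supp_vert T A _ _ fc.
rewrite /VRbd /iota /CLbd.
have E1 : forall i : 'I_n.+2, \sum_(v \in [set: T]) signz (odd i)
     (if incr (tins i v y) then c (tins i v y) else 0) =
   \sum_(v <- W) (if incr (tins i v y) then c (cons_tuple v y) else 0).
  move=> i; rewrite (fsE uW).
    apply: eq_bigr => v _; case: ifP => _; last exact: signz0.
    rewrite -{1}(tperm1 y) tins_perm ac odd_lift_perm odd_perm1 /= addbF.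
    by rewrite ?addbF signzK.
  move=> v vW; case: ifP => _; last exact: signz0.
  case: (eqVneq (c (tins i v y)) 0) => [->|]; first exact: signz0.
  by move/HW/(_ i); rewrite tins_tnth (negbTE vW).
rewrite (eq_bigr _ (fun i _ => E1 i)) exchange_big /=.
rewrite (fsE uW); last first.
  move=> v vW; apply/eqP; apply: contraT => /HW/(_ ord0).
  by rewrite tnth0 (negbTE vW).
transitivity (\sum_(v <- W) if incr y then c (cons_tuple v y) else 0); last first.
  by case: ifP => _ //; rewrite big1.
apply: eq_bigr => v _.
case: (eqVneq (c (cons_tuple v y)) 0) => [->|cv].
  by rewrite big1 ?if_same // => i _; rewrite if_same.
apply: count_ins; apply/tnthP => -[k vk].
have := cc _ cv ord0 (lift ord0 k) (neq_lift _ _); rewrite tnth0 tnthS vk.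
by case.
Qed.

Lemma piC_fin n (c : n.+1.-tuple T -> A) : fin_supp c -> fin_supp (piC c).
Proof.
move=> /(@fin_supp_vert T A) [W [_ HW]]; apply: (@vert_fin_supp T A _ _ W) => x.
rewrite /piC; case: ifP => _; last by rewrite eqxx.
move=> /sum_neq0 [s]; rewrite signz_eq0 => /HW H k.
by rewrite (tnth_perm_mem s).
Qed.

Lemma piC_alt n (c : n.+1.-tuple T -> A) (t : 'S_n.+1) x :
  piC c (tperm_tuple t x) = signz (odd_perm t) (piC c x).
Proof.
rewrite /piC; have E : `[< clique adj (tperm_tuple t x) >] = `[< clique adj x >].
  by apply/asboolP/asboolP => /clique_permE.
rewrite E; case: ifP => _; last by rewrite signz0.
rewrite signz_sum [RHS](reindex_inj (mulIg t)) /=.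
apply: eq_bigr => s _; rewrite tpermM odd_permM.
by case: (odd_perm s); case: (odd_perm t) => /=; rewrite ?opprK.
Qed.

Lemma piC_adm n (c : n.+1.-tuple T -> A) : fin_supp c -> CLadm adj (piC c).
Proof.
move=> fc; split; first exact: piC_fin.
  by move=> x; rewrite /piC; case: ifP => [/asboolP //|]; rewrite eqxx.
by move=> s x; apply: piC_alt.
Qed.

Lemma piC_iota n (c : n.+1.-tuple T -> A) : CLadm adj c -> piC (iota c) = c.
Proof.
case=> _ cc ac; apply: funext => x; rewrite /piC /iota.
case: ifP => [/asboolP cx | /asboolP ncx]; last first.
  by apply/esym/eqP; apply: contraT => /cc.
have ux := clique_uniq cx.
have [s0 H0] := sort_exists ux.
rewrite (bigD1 s0) //= H0 big1 ?addr0; first by rewrite ac signzK.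
move=> s ss0; case: ifP => Hs; last exact: signz0.
by move: ss0; rewrite (sort_unique ux Hs H0) eqxx.
Qed.

Lemma E0_sym p q : E0 (p, q) -> E0 (q, p).
Proof. by case=> /= [/adj_sym|->]; [left|right]. Qed.

Lemma nonclique_vanish n (c : n.+2.-tuple T -> A) (v : T) (y : n.+1.-tuple T) :
  (forall x, c x != 0 -> VRsimplex E0 x) -> clique adj y ->
  ~ clique adj (cons_tuple v y) ->
  \sum_(t : 'S_n.+2) signz (odd_perm t) (c (tperm_tuple t (cons_tuple v y))) = 0.
Proof.
move=> cE cy ncv.
have [k Hk] : exists k, v = tnth y k \/ ~ adj v (tnth y k).
  apply: contrapT => nH; apply: ncv => i j ij.
  have H k : v <> tnth y k /\ adj v (tnth y k).
    split => [e|]; first by apply: nH; exists k; left.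
    by apply: contrapT => na; apply: nH; exists k; right.
  case: (unliftP ord0 i) => [i'|] -> in ij *; case: (unliftP ord0 j) => [j'|] -> in ij *.
  - rewrite !tnthS; apply: cy; apply: contraNneq ij => ->; by [].
  - by rewrite tnthS tnth0; case: (H i') => h1 h2; split; [move=> e; apply: h1 | apply: adj_sym].
  - by rewrite tnthS tnth0; exact: H.
  - by move: ij; rewrite eqxx.
set z := cons_tuple v y.
have pz0 : tnth z ord0 = v by [].
have pzk : tnth z (lift ord0 k) = tnth y k by rewrite tnthS.
case: (pselect (v = tnth y k)) => [vk | nvk]; last first.
  have nadj : ~ adj v (tnth y k) by case: Hk.
  apply: big1 => t _.
  case: (eqVneq (c (tperm_tuple t z)) 0) => [->|ctz]; first exact: signz0.
  exfalso; have sx := cE _ ctz.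
  set p := ((t^-1)%g ord0); set q := ((t^-1)%g (lift ord0 k)).
  have Tp : tnth (tperm_tuple t z) p = v by rewrite tnth_mktuple /p permKV.
  have Tq : tnth (tperm_tuple t z) q = tnth y k by rewrite tnth_mktuple /q permKV pzk.
  have pq : p != q by rewrite /p /q (inj_eq perm_inj) neq_lift.
  case: (ltngtP p q) => [pq'|qp'|/val_inj e]; last by rewrite e eqxx in pq.
  - by have := sx _ _ pq'; rewrite Tp Tq => -[/nadj|/nvk].
  - by have := sx _ _ qp'; rewrite Tp Tq => /E0_sym [/nadj|/nvk].
set tau := tperm ord0 (lift ord0 k).
have Htau : forall t : 'S_n.+2, tperm_tuple (t * tau)%g z = tperm_tuple t z.
  move=> t; apply: eq_from_tnth => i; rewrite !tnth_mktuple permM /tau.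
  case: tpermP => // ->; rewrite pzk pz0 //.
set G := fun t : 'S_n.+2 => signz (odd_perm t) (c (tperm_tuple t z)).
have HG : forall t, G (t * tau)%g = - G t.
  move=> t; rewrite /G Htau odd_permM /tau odd_tperm neq_lift addbT.
  by case: (odd_perm t) => //=; rewrite opprK.
rewrite -/(G _) (bigID (fun t : 'S_n.+2 => odd_perm t)) /=.
rewrite (reindex_inj (mulIg tau)) /=.
have -> : \sum_(i | odd_perm (i * tau)%g) G (i * tau)%g = \sum_(i | ~~ odd_perm i) - G i.
  apply: eq_big => [t|t _]; last exact: HG.
  by rewrite odd_permM /tau odd_tperm neq_lift addbT.
by rewrite sumrN addNr.
Qed.

Lemma piC_bd n (c : n.+2.-tuple T -> A) : fin_supp c ->
  (forall x, c x != 0 -> VRsimplex E0 x) ->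
  piC (VRbd c) = CLbd (piC c).
Proof.
move=> fc cE; apply: funext => y.
have [W [uW HW]] := @fin_supp_vert T A _ _ fc.
rewrite /piC /VRbd /CLbd.
case: ifP => [/asboolP cy | /asboolP ncy]; last first.
  apply/esym/fsbig1 => v _; case: ifP => // /asboolP /clique_cons //.
rewrite (fsE uW); last first.
  move=> v vW; case: ifP => // _; apply: big1 => t _.
  case: (eqVneq (c (tperm_tuple t (cons_tuple v y))) 0) => [->|]; first exact: signz0.
  move/HW/(_ ((t^-1)%g ord0)).
  by rewrite tnth_mktuple permKV tnth0 (negbTE vW).
have E1 : forall (s : 'S_n.+1) (i : 'I_n.+2),
  \sum_(v \in [set: T]) signz (odd i) (c (tins i v (tperm_tuple s y))) =
  \sum_(v <- W) signz (odd i) (c (tins i v (tperm_tuple s y))).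
  move=> s i; rewrite (fsE uW) // => v vW.
  case: (eqVneq (c (tins i v (tperm_tuple s y))) 0) => [->|]; first exact: signz0.
  by move/HW/(_ i); rewrite tins_tnth (negbTE vW).
under eq_bigr => s _ do (under eq_bigr => i _ do rewrite E1; rewrite !signz_sum).
under eq_bigr => s _ do under eq_bigr => i _ do rewrite signz_sum.
rewrite exchange_big /=.
under eq_bigr => i _ do rewrite exchange_big /=.
rewrite exchange_big /=.
apply: eq_bigr => v _.
case: ifP => [_|/asboolP ncv]; last rewrite -[RHS](nonclique_vanish cE cy ncv);
  rewrite perm_split /=; apply: eq_bigr => i _; apply: eq_bigr => s _;
  rewrite tins_perm odd_lift_perm /=;
  by case: (odd i); case: (odd_perm s) => /=; rewrite ?opprK.
Qed.

End Main.

Section Hom.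
Variable V : Type.
Local Notation T := {classic V}.
Variable adj : V -> V -> Prop.
Hypothesis adj_sym : forall x y, adj x y -> adj y x.
Variable A : zmodType.

Definition IP n (c : n.+1.-tuple T -> A) := iota (piC adj c).
Definition delta n (x : n.+1.-tuple T) (a : A) : n.+1.-tuple T -> A :=
  fun z => if z == x then a else 0.
Definition cone n (v : T) (c : n.+1.-tuple T -> A) : n.+2.-tuple T -> A :=
  fun z => if thead z == v then c (behead_tuple z) else 0.

Definition vin n (W : seq T) (c : n.-tuple T -> A) :=
  forall z, c z != 0 -> forall k, tnth z k \in W.

Lemma vin_fin n W (c : n.-tuple T -> A) : vin W c -> fin_supp c.
Proof. exact: (@vert_fin_supp T A n c W). Qed.

Lemma fin_vin n (c : n.-tuple T -> A) : fin_supp c -> exists W, uniq W /\ vin W c.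
Proof. exact: (@fin_supp_vert T A n c). Qed.

Lemma fin_vin2 n (c c' : n.-tuple T -> A) : fin_supp c -> fin_supp c' ->
  exists W, [/\ uniq W, vin W c & vin W c'].
Proof.
move=> /fin_vin [W1 [_ H1]] /fin_vin [W2 [_ H2]].
exists (undup (W1 ++ W2)); split; first exact: undup_uniq.
  by move=> z /H1 H k; rewrite mem_undup mem_cat H.
by move=> z /H2 H k; rewrite mem_undup mem_cat H orbT.
Qed.

Lemma add_fin n (c c' : n.-tuple T -> A) : fin_supp c -> fin_supp c' ->
  fin_supp (chain_add c c').
Proof.
move=> f1 f2; have [W [_ H1 H2]] := fin_vin2 f1 f2.
apply: (@vin_fin _ W) => z; rewrite /chain_add.
case: (eqVneq (c z) 0) => [->|/H1 //]; rewrite add0r; exact: H2.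
Qed.

Lemma zero_fin n : fin_supp (fun _ : n.-tuple T => 0 : A).
Proof. by apply: (@vin_fin _ [::]) => z; rewrite eqxx. Qed.

Lemma delta_fin n (x : n.+1.-tuple T) a : fin_supp (delta x a).
Proof.
apply: (@list_fin_supp _ _ _ [:: x]) => z; rewrite /delta.
case: (eqVneq z x) => [->|ne]; first by rewrite mem_head.
by rewrite ?eqxx.
Qed.

Lemma tnth_beh n (z : n.+1.-tuple T) k : tnth (behead_tuple z) k = tnth z (lift ord0 k).
Proof. by case/tupleP: z => x t; rewrite tnthS; congr tnth; apply: val_inj. Qed.

Lemma beh_cons n (v : T) (y : n.-tuple T) : behead_tuple (cons_tuple v y) = y.
Proof. by apply: val_inj. Qed.

Lemma cone_vin n W v (c : n.+1.-tuple T -> A) : v \in W -> vin W c -> vin W (cone v c).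
Proof.
move=> vW H z; rewrite /cone; case: (eqVneq (thead z) v) => [hz|_]; last by rewrite eqxx.
move=> /H Hb k; case: (unliftP ord0 k) => [k'|] ->.
  by have := Hb k'; rewrite tnth_beh.
by rewrite -[tnth z ord0]/(thead z) hz.
Qed.

Lemma cone_fin n v (c : n.+1.-tuple T -> A) : fin_supp c -> fin_supp (cone v c).
Proof.
move=> /fin_vin [W [_ H]]; apply: (@vin_fin _ (v :: W)); apply: cone_vin.
  exact: mem_head.
by move=> z /H Hz k; rewrite inE Hz orbT.
Qed.

Lemma tins_lift n (i : 'I_n.+2) (v : T) (y : n.+1.-tuple T) k :
  tnth (tins i v y) (lift i k) = tnth y k.
Proof. by rewrite tnth_mktuple liftK. Qed.

Lemma fs_neq0 (I : choiceType) (F : I -> A) :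
  \sum_(i \in [set: I]) F i != 0 -> exists i, F i != 0.
Proof.
move=> H; apply: contrapT => nE; move: H; rewrite fsbig1 ?eqxx // => i _.
apply: contrapT => Fi; apply: nE; exists i; exact/eqP.
Qed.

Lemma VRbd_supp n (c : n.+2.-tuple T -> A) y : VRbd c y != 0 ->
  exists i v, c (tins i v y) != 0.
Proof.
rewrite /VRbd => /sum_neq0 [i] /fs_neq0 [v]; rewrite signz_eq0 => H.
by exists i, v.
Qed.

Lemma VRbd_vin n W (c : n.+2.-tuple T -> A) : vin W c -> vin W (VRbd c).
Proof.
move=> H y /VRbd_supp [i [v /H Hc]] k; by rewrite -(tins_lift i v).
Qed.

Lemma VRbd_fin n (c : n.+2.-tuple T -> A) : fin_supp c -> fin_supp (VRbd c).
Proof. by move=> /fin_vin [W [_ H]]; apply: (@vin_fin _ W); apply: VRbd_vin. Qed.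

Lemma IP_vin n W (c : n.+1.-tuple T -> A) : vin W c -> vin W (IP c).
Proof.
move=> H x; rewrite /IP /iota /piC; case: ifP => _; last by rewrite eqxx.
case: ifP => _; last by rewrite eqxx.
move=> /sum_neq0 [s]; rewrite signz_eq0 => /H Hs k.
by rewrite (tnth_perm_mem s).
Qed.

Lemma IP_fin n (c : n.+1.-tuple T -> A) : fin_supp c -> fin_supp (IP c).
Proof. by move=> /fin_vin [W [_ H]]; apply: (@vin_fin _ W); apply: IP_vin. Qed.

Lemma VRbdE n W (c : n.+2.-tuple T -> A) y : uniq W -> vin W c ->
  VRbd c y = \sum_(i < n.+2) \sum_(v <- W) signz (odd i) (c (tins i v y)).
Proof.
move=> uW H; apply: eq_bigr => i _; rewrite (fsE uW) // => v vW.
case: (eqVneq (c (tins i v y)) 0) => [->|]; first exact: signz0.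
by move/H/(_ i); rewrite tins_tnth (negbTE vW).
Qed.

Lemma VRbd_add n (c c' : n.+2.-tuple T -> A) : fin_supp c -> fin_supp c' ->
  VRbd (chain_add c c') = chain_add (VRbd c) (VRbd c').
Proof.
move=> f1 f2; have [W [uW H1 H2]] := fin_vin2 f1 f2.
have H : vin W (chain_add c c').
  move=> z; rewrite /chain_add; case: (eqVneq (c z) 0) => [->|/H1 //].
  rewrite add0r; exact: H2.
apply: funext => y; rewrite /chain_add !(VRbdE _ uW) // -big_split /=.
apply: eq_bigr => i _; rewrite -big_split /=; apply: eq_bigr => v _.
exact: signzD.
Qed.

Lemma VRbd_zero n : VRbd (fun _ : n.+2.-tuple T => 0 : A) = fun _ => 0.
Proof.
apply: funext => y; apply: big1 => i _; apply: fsbig1 => v _; exact: signz0.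
Qed.

Lemma IP_add n (c c' : n.+1.-tuple T -> A) :
  IP (chain_add c c') = chain_add (IP c) (IP c').
Proof.
apply: funext => x; rewrite /IP /iota /piC /chain_add.
case: ifP => _; last by rewrite addr0.
case: ifP => _; last by rewrite addr0.
by rewrite -big_split /=; apply: eq_bigr => s _; rewrite signzD.
Qed.

Lemma IP_zero n : IP (fun _ : n.+1.-tuple T => 0 : A) = fun _ => 0.
Proof.
apply: funext => x; rewrite /IP /iota /piC; case: ifP => // _; case: ifP => // _.
by apply: big1 => s _; exact: signz0.
Qed.

Lemma lin_sum (X Y : Type) (L : (X -> A) -> (Y -> A)) (P : (X -> A) -> Prop) :
  P (fun _ => 0) -> (forall c c', P c -> P c' -> P (chain_add c c')) ->
  L (fun _ => 0) = (fun _ => 0) ->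
  (forall c c', P c -> P c' -> L (chain_add c c') = chain_add (L c) (L c')) ->
  forall (I : Type) (r : seq I) (f : I -> X -> A), (forall i, P (f i)) ->
  L (fun z => \sum_(i <- r) f i z) = fun y => \sum_(i <- r) L (f i) y.
Proof.
move=> P0 PD L0 LD I r f Pf.
have E0' : (fun z : X => \sum_(i <- [::]) f i z) = fun _ => 0.
  by apply: funext => z; rewrite big_nil.
have Ec : forall i r, (fun z : X => \sum_(j <- i :: r) f j z) =
    chain_add (f i) (fun z => \sum_(j <- r) f j z).
  by move=> i r'; apply: funext => z; rewrite big_cons.
have Ps : forall r, P (fun z : X => \sum_(i <- r) f i z).
  by elim => [|i r' IH]; [rewrite E0' | rewrite Ec; apply: PD].
elim: r => [|i r IH].
  by rewrite E0' L0; apply: funext => y; rewrite big_nil.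
rewrite Ec LD // IH; apply: funext => y; by rewrite big_cons.
Qed.

Lemma decomp n (c : n.+1.-tuple T -> A) (S : seq (n.+1.-tuple T)) : uniq S ->
  (forall x, c x != 0 -> x \in S) ->
  c = fun z => \sum_(x <- S) delta x (c x) z.
Proof.
move=> uS HS; apply: funext => z; rewrite /delta.
case: (boolP (z \in S)) => zS.
  rewrite (bigD1_seq z) //= eqxx big1 ?addr0 // => x xz.
  by rewrite eq_sym (negbTE xz).
rewrite big1_seq => [|x /= xS]; last by case: (eqVneq z x) => // e; rewrite e xS in zS.
by apply/eqP; apply: contraT => /HS; rewrite (negbTE zS).
Qed.

End Hom.

Section Hom2.
Variable V : Type.
Local Notation T := {classic V}.
Variable adj : V -> V -> Prop.
Hypothesis adj_sym : forall x y, adj x y -> adj y x.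
Variable A : zmodType.

Lemma fsbigN (I : choiceType) (P : set I) (F : I -> A) :
  \sum_(i \in P) - F i = - \sum_(i \in P) F i.
Proof.
have E : finite_support 0 P (fun i => - F i) = finite_support 0 P F.
  rewrite /finite_support; congr (locked_with _ (fset_set _)).
  apply/seteqP; split => x /= [Px H]; split => //; move: H; rewrite /preimage /= => H e;
  apply: H; rewrite /= in e *; by [rewrite e oppr0 | apply/eqP; rewrite -oppr_eq0; apply/eqP].
by rewrite E sumrN.
Qed.

Lemma odd_lift0 n (j : 'I_n.+1) : odd (lift ord0 j) = ~~ odd j.
Proof. by rewrite lift0. Qed.

Lemma signzNb b (a : A) : signz (~~ b) a = - signz b a.
Proof. by case: b => //=; rewrite opprK. Qed.

Lemma cone_bd n (v : T) (c : n.+2.-tuple T -> A) :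
  VRbd (cone v c) = chain_sub c (cone v (VRbd c)).
Proof.
apply: funext => y; rewrite /chain_sub {1}/VRbd big_ord_recl /=.
have -> : \sum_(u \in [set: T]) cone v c (tins ord0 u y) = c y.
  rewrite (@fsE _ _ _ [:: v]) // ?big_cons ?big_nil.
    by rewrite /cone tins0 /= eqxx beh_cons addr0.
  move=> u; rewrite inE => uv; by rewrite /cone tins0 /= (negbTE uv).
congr (_ + _).
rewrite /cone; case: eqP => [hv|nv]; last first.
  rewrite oppr0; apply: big1 => j _; rewrite fsbig1 ?signz0 // => u _.
  by rewrite tinsS theadE (introF eqP nv) signz0.
rewrite /VRbd -sumrN; apply: eq_bigr => j _.
rewrite -fsbigN; apply: eq_fsbigr => u _.
by rewrite ?add0n signzNb tinsS theadE hv eqxx beh_cons.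
Qed.

Lemma cone_bd0 (v : T) (e : 1.-tuple T -> A) :
  VRbd (cone v e) = fun y => e y -
    (if thead y == v then \sum_(u \in [set: T]) e [tuple u] else 0).
Proof.
apply: funext => y; rewrite /VRbd big_ord_recl big_ord1 /=.
have -> : \sum_(u \in [set: T]) cone v e (tins ord0 u y) = e y.
  rewrite (@fsE _ _ _ [:: v]) // ?big_cons ?big_nil.
    by rewrite /cone tins0 /= eqxx beh_cons addr0.
  move=> u; rewrite inE => uv; by rewrite /cone tins0 /= (negbTE uv).
have E : forall u, tins (lift ord0 ord0) u y = cons_tuple (thead y) [tuple u].
  move=> u; apply: val_inj; rewrite tins_seq; case/tupleP: y => y0 t.
  by rewrite tuple0.
congr (_ + _).
rewrite /cone; case: eqP => [hv|nv]; last first.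
  by rewrite oppr0 fsbig1 // => u _; rewrite E theadE (introF eqP nv) ?signz0 ?oppr0.
rewrite -fsbigN; apply: eq_fsbigr => u _.
by rewrite E theadE hv eqxx beh_cons.
Qed.

Lemma aug_bd (d : 2.-tuple T -> A) : fin_supp d ->
  \sum_(u \in [set: T]) VRbd d [tuple u] = 0.
Proof.
move=> /fin_vin [W [uW H]].
rewrite (fsE uW); last first.
  move=> u uW'; case: (eqVneq (VRbd d [tuple u]) 0) => // /(VRbd_vin H) /(_ ord0) /=.
  by rewrite (negbTE uW').
have E0' : forall u w : T, tins ord0 w [tuple u] = [tuple w; u].
  by move=> u w; apply/val_inj; rewrite tins_seq.
have E1 : forall u w : T, tins (lift ord0 ord0) w [tuple u] = [tuple u; w].
  by move=> u w; apply/val_inj; rewrite tins_seq.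
under eq_bigr => u _ do rewrite (VRbdE _ uW H) big_ord_recl big_ord1 /=.
rewrite big_split /=.
under [X in _ + X]eq_bigr => u _ do rewrite sumrN.
rewrite sumrN [X in _ - X]exchange_big /= -sumrB big1 // => w _.
rewrite -sumrB big1 // => u _.
by rewrite E0' E1 subrr.
Qed.

Lemma delta_cone n (x : n.+2.-tuple T) (a : A) :
  delta x a = cone (thead x) (delta (behead_tuple x) a).
Proof.
apply: funext => z; rewrite /delta /cone.
case/tupleP: x => x0 xt; case/tupleP: z => z0 zt.
rewrite !theadE !beh_cons.
case: (eqVneq z0 x0) => [->|ne].
  case: (eqVneq zt xt) => [->|ne']; first by rewrite !eqxx.
  case: eqP => // /(congr1 val) /= [] /val_inj e; by rewrite e eqxx in ne'.
case: eqP => // /(congr1 val) /= [] e; by rewrite e eqxx in ne.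
Qed.

Lemma VRbd_sub n (c c' : n.+2.-tuple T -> A) : fin_supp c -> fin_supp c' ->
  VRbd (chain_sub c c') = chain_sub (VRbd c) (VRbd c').
Proof.
move=> f1 f2; have [W [uW H1 H2]] := fin_vin2 f1 f2.
have H : vin W (chain_sub c c').
  move=> z; rewrite /chain_sub; case: (eqVneq (c z) 0) => [->|/H1 //].
  rewrite sub0r oppr_eq0; exact: H2.
apply: funext => y; rewrite /chain_sub !(VRbdE _ uW) // -sumrB /=.
apply: eq_bigr => i _; rewrite -sumrB /=; apply: eq_bigr => v _.
exact: signzB.
Qed.

Lemma sub_fin n (c c' : n.-tuple T -> A) : fin_supp c -> fin_supp c' ->
  fin_supp (chain_sub c c').
Proof.
move=> f1 f2; have [W [_ H1 H2]] := fin_vin2 f1 f2.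
apply: (@vin_fin _ _ _ W) => z; rewrite /chain_sub.
case: (eqVneq (c z) 0) => [->|/H1 //]; rewrite sub0r oppr_eq0; exact: H2.
Qed.

Lemma cone_zero n (v : T) : cone v (fun _ : n.+1.-tuple T => 0 : A) = fun _ => 0.
Proof. by apply: funext => z; rewrite /cone if_same. Qed.

Lemma bdbd_delta n (x : n.+3.-tuple T) (a : A) :
  VRbd (VRbd (delta x a)) = fun _ => 0.
Proof.
elim: n x => [|m IH] x; rewrite delta_cone cone_bd.
  have f1 : fin_supp (delta (behead_tuple x) a) by apply: delta_fin.
  rewrite VRbd_sub //; last by apply: cone_fin; apply: VRbd_fin.
  rewrite (cone_bd0 (thead x) (VRbd (delta (behead_tuple x) a))).
  by apply: funext => y; rewrite /chain_sub /= (aug_bd f1) if_same subr0 subrr.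
have f1 : fin_supp (delta (behead_tuple x) a) by apply: delta_fin.
rewrite VRbd_sub //; last by apply: cone_fin; apply: VRbd_fin.
rewrite cone_bd IH cone_zero.
by apply: funext => y; rewrite /chain_sub subr0 subrr.
Qed.

Lemma IP_bd n (c : n.+2.-tuple T -> A) : fin_supp c ->
  (forall x, c x != 0 -> VRsimplex (E0 adj) x) ->
  VRbd (IP adj c) = IP adj (VRbd c).
Proof.
move=> fc cE; rewrite /IP (iota_bd (piC_adm adj fc)).
by rewrite (piC_bd adj_sym fc cE).
Qed.

Lemma IP_id0 (c : 1.-tuple T -> A) : IP adj c = c.
Proof.
apply: funext => x; rewrite /IP /iota /piC.
have -> : incr x by case/tupleP: x => x0 t; rewrite tuple0.
have -> : `[< clique adj x >] = true.
  by apply/asboolP => i j; rewrite !ord1 eqxx.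
rewrite (big_pred1 1%g) => [|s]; first by rewrite odd_perm1 tperm1.
by apply/esym/eqP/permP => i; rewrite (ord1 (s i)) (ord1 ((1%g : 'S_1) i)).
Qed.

End Hom2.

Section Homotopy.
Variable V : Type.
Local Notation T := {classic V}.
Variable adj : V -> V -> Prop.
Hypothesis adj_sym : forall x y, adj x y -> adj y x.
Variable A : zmodType.

Definition Kf m (D : (m.+1.-tuple T -> A) -> (m.+2.-tuple T -> A))
    (x : m.+2.-tuple T) (a : A) : m.+3.-tuple T -> A :=
  cone (thead x) (fun z => delta x a z - IP adj (delta x a) z - D (VRbd (delta x a)) z).

Fixpoint Dfun n : (n.+1.-tuple T -> A) -> (n.+2.-tuple T -> A) :=
  match n return (n.+1.-tuple T -> A) -> (n.+2.-tuple T -> A) with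
  | 0 => fun _ _ => 0
  | m.+1 => fun c z => \sum_(x \in [set: m.+2.-tuple T]) Kf (@Dfun m) x (c x) z
  end.

Lemma delta_zero n (x : n.+1.-tuple T) : delta x (0 : A) = fun _ => 0.
Proof. by apply: funext => z; rewrite /delta if_same. Qed.

Lemma delta_add n (x : n.+1.-tuple T) (a b : A) :
  delta x (a + b) = chain_add (delta x a) (delta x b).
Proof. by apply: funext => z; rewrite /delta /chain_add; case: ifP; rewrite ?addr0. Qed.

Lemma Kf_zero0 m (D : (m.+1.-tuple T -> A) -> (m.+2.-tuple T -> A)) x :
  D (fun _ => 0) = (fun _ => 0) -> Kf D x 0 = fun _ => 0.
Proof.
move=> D0; rewrite /Kf delta_zero IP_zero VRbd_zero D0.
by apply: funext => z; rewrite /cone !subr0 if_same.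
Qed.

Lemma Dfun_zero m : @Dfun m (fun _ => 0) = fun _ => 0.
Proof.
elim: m => [//|m IH] /=; apply: funext => z.
by apply: fsbig1 => x _; rewrite Kf_zero0.
Qed.

Lemma Kf_zero m x : Kf (@Dfun m) x 0 = fun _ => 0.
Proof. exact/Kf_zero0/Dfun_zero. Qed.

Lemma vin_sub n W (c c' : n.-tuple T -> A) : vin W c -> vin W c' ->
  vin W (fun z => c z - c' z).
Proof.
move=> H1 H2 z; case: (eqVneq (c z) 0) => [->|/H1 //]; rewrite sub0r oppr_eq0; exact: H2.
Qed.

Lemma delta_vin n W (x : n.+1.-tuple T) (a : A) : (forall k, tnth x k \in W) -> vin W (delta x a).
Proof.
move=> H z; rewrite /delta; case: (eqVneq z x) => [->|]; by rewrite ?eqxx.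
Qed.

Lemma Kf_vin m (D : (m.+1.-tuple T -> A) -> (m.+2.-tuple T -> A)) :
  (forall W c, vin W c -> vin W (D c)) ->
  forall W x a, (forall k, tnth x k \in W) -> vin W (Kf D x a).
Proof.
move=> HD W x a Hx; apply: cone_vin; first exact: Hx.
apply: vin_sub; first apply: vin_sub.
- exact: delta_vin.
- exact/IP_vin/delta_vin.
- exact/HD/VRbd_vin/delta_vin.
Qed.

Lemma Dfun_ex m (c : m.+2.-tuple T -> A) z : @Dfun m.+1 c z != 0 ->
  exists x, c x != 0 /\ Kf (@Dfun m) x (c x) z != 0.
Proof.
move=> /fs_neq0 [x Hx]; exists x; split => //.
by apply: contraNneq Hx => ->; rewrite Kf_zero.
Qed.

Lemma Dfun_vin m W (c : m.+1.-tuple T -> A) : vin W c -> vin W (@Dfun m c).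
Proof.
elim: m W c => [|m IH] W c H z /=; first by rewrite eqxx.
move=> /Dfun_ex [x [cx Kx]].
by apply: (Kf_vin IH (H _ cx) Kx).
Qed.

Lemma Dfun_fin m (c : m.+1.-tuple T -> A) : fin_supp c -> fin_supp (@Dfun m c).
Proof. by move=> /fin_vin [W [_ H]]; apply: (@vin_fin _ _ _ W); apply: Dfun_vin. Qed.

Lemma Dfun_supp m (c : m.+1.-tuple T -> A) z : @Dfun m c z != 0 ->
  exists x, c x != 0 /\ forall k, tnth z k \in (val x).
Proof.
case: m c z => [|m] c z /=; first by rewrite eqxx.
move=> /Dfun_ex [x [cx Kx]]; exists x; split => //.
apply: (Kf_vin (@Dfun_vin m) _ Kx) => k; exact: mem_tnth.
Qed.

Lemma simplex_sub n m (x : n.+1.-tuple T) (z : m.+1.-tuple T) :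
  VRsimplex (E0 adj) x -> (forall k, tnth z k \in (val x)) -> VRsimplex (E0 adj) z.
Proof.
move=> sx H i j ij.
have /tnthP [p ->] := H i; have /tnthP [q ->] := H j.
case: (ltngtP p q) => [pq|qp|/val_inj ->]; first exact: sx.
  exact/E0_sym/sx.
by right.
Qed.

Lemma Dfun_E0 m (c : m.+1.-tuple T -> A) :
  (forall x, c x != 0 -> VRsimplex (E0 adj) x) ->
  forall z, @Dfun m c z != 0 -> VRsimplex (E0 adj) z.
Proof.
move=> cE z /Dfun_supp [x [/cE sx H]]; exact: simplex_sub sx H.
Qed.

Lemma Dfun_list m (c : m.+2.-tuple T -> A) S : uniq S -> (forall x, c x != 0 -> x \in S) ->
  @Dfun m.+1 c = fun z => \sum_(x <- S) Kf (@Dfun m) x (c x) z.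
Proof.
move=> uS HS; apply: funext => z /=; rewrite (fsE uS) // => x xS.
have -> : c x = 0 by apply/eqP; apply: contraT => /HS; rewrite (negbTE xS).
by rewrite Kf_zero.
Qed.

Lemma sub3D (a1 a2 b1 b2 c1 c2 : A) :
  (a1 + a2) - (b1 + b2) - (c1 + c2) = (a1 - b1 - c1) + (a2 - b2 - c2).
Proof. by rewrite !opprD (addrACA a1) (addrACA (a1 - b1)). Qed.

Lemma cone_add n (v : T) (c c' : n.+1.-tuple T -> A) :
  cone v (chain_add c c') = chain_add (cone v c) (cone v c').
Proof. by apply: funext => z; rewrite /cone /chain_add; case: ifP; rewrite ?addr0. Qed.

Lemma Dfun_add m (c c' : m.+1.-tuple T -> A) : fin_supp c -> fin_supp c' ->
  @Dfun m (chain_add c c') = chain_add (@Dfun m c) (@Dfun m c').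
Proof.
elim: m c c' => [|m IH] c c' f1 f2.
  by apply: funext => z; rewrite /chain_add /= addr0.
have [S1 [_ H1]] := fin_supp_list f1; have [S2 [_ H2]] := fin_supp_list f2.
set S := undup (S1 ++ S2).
have uS : uniq S by apply: undup_uniq.
have HS1 : forall x, c x != 0 -> x \in S by move=> x /H1 h; rewrite mem_undup mem_cat h.
have HS2 : forall x, c' x != 0 -> x \in S by move=> x /H2 h; rewrite mem_undup mem_cat h orbT.
have HS : forall x, chain_add c c' x != 0 -> x \in S.
  move=> x; rewrite /chain_add; case: (eqVneq (c x) 0) => [->|/HS1 //].
  rewrite add0r; exact: HS2.
rewrite (Dfun_list uS HS) (Dfun_list uS HS1) (Dfun_list uS HS2).
apply: funext => z; rewrite /chain_add -big_split /=; apply: eq_bigr => x _.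
have Kadd : forall a b : A, Kf (@Dfun m) x (a + b) = chain_add (Kf (@Dfun m) x a) (Kf (@Dfun m) x b).
  move=> a b; rewrite /Kf -cone_add; congr cone; apply: funext => y.
  have fa := delta_fin x a; have fb := delta_fin x b.
  rewrite delta_add IP_add (VRbd_add fa fb).
  rewrite (IH _ _ (VRbd_fin fa) (VRbd_fin fb)).
  by rewrite /chain_add sub3D.
by rewrite Kadd.
Qed.

Lemma Kf_fin m x a : fin_supp (Kf (@Dfun m) x a).
Proof.
apply: (@vin_fin _ _ _ (val x)); apply: (Kf_vin (@Dfun_vin m)) => k; exact: mem_tnth.
Qed.

Lemma delta_E0 n (x : n.+1.-tuple T) (a : A) : VRsimplex (E0 adj) x ->
  forall z, delta x a z != 0 -> VRsimplex (E0 adj) z.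
Proof. by move=> sx z; rewrite /delta; case: (eqVneq z x) => [->|]; rewrite ?eqxx. Qed.

Definition Cg m := forall (x : m.+2.-tuple T) (a : A), VRsimplex (E0 adj) x ->
  VRbd (@Dfun m (VRbd (delta x a))) =
  chain_sub (VRbd (delta x a)) (IP adj (VRbd (delta x a))).

Lemma C0 (b : 1.-tuple T -> A) : VRbd (@Dfun 0 b) = chain_sub b (IP adj b).
Proof.
rewrite IP_id0; apply: funext => y; rewrite /chain_sub subrr.
by apply: big1 => i _; apply: fsbig1 => v _; exact: signz0.
Qed.

Lemma Cg0 : Cg 0.
Proof. by move=> x a _; apply: C0. Qed.

Definition Hm m := forall (c : m.+2.-tuple T -> A), fin_supp c ->
  (forall x, c x != 0 -> VRsimplex (E0 adj) x) ->
  forall y, VRbd (@Dfun m.+1 c) y + @Dfun m (VRbd c) y = c y - IP adj c y.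

Lemma H_of_C m : Cg m -> Hm m.
Proof.
move=> HC c fc cE y.
have [S [uS HS]] := fin_supp_list fc.
have Ec := decomp uS HS.
rewrite (Dfun_list uS HS).
have E1 : VRbd (fun z => \sum_(x <- S) Kf (@Dfun m) x (c x) z) =
    fun y => \sum_(x <- S) VRbd (Kf (@Dfun m) x (c x)) y.
  apply: (@lin_sum _ _ _ _ (@fin_supp _ A)) => //.
  - exact: zero_fin.
  - exact: add_fin.
  - exact: VRbd_zero.
  - exact: VRbd_add.
  - by move=> x; apply: Kf_fin.
rewrite E1.
have E2 : VRbd c = fun y => \sum_(x <- S) VRbd (delta x (c x)) y.
  rewrite {1}Ec; apply: (@lin_sum _ _ _ _ (@fin_supp _ A)) => //.
  - exact: zero_fin.
  - exact: add_fin.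
  - exact: VRbd_zero.
  - exact: VRbd_add.
  - by move=> x; apply: delta_fin.
have E3 : @Dfun m (VRbd c) = fun y => \sum_(x <- S) @Dfun m (VRbd (delta x (c x))) y.
  rewrite E2; apply: (@lin_sum _ _ _ _ (@fin_supp _ A)) => //.
  - exact: zero_fin.
  - exact: add_fin.
  - exact: Dfun_zero.
  - exact: Dfun_add.
  - by move=> x; apply/VRbd_fin/delta_fin.
have E4 : IP adj c = fun y => \sum_(x <- S) IP adj (delta x (c x)) y.
  rewrite {1}Ec; apply: (@lin_sum _ _ _ _ (fun _ => True)) => //.
  - exact: IP_zero.
  - by move=> c1 c2 _ _; apply: IP_add.
have E5 : c y = \sum_(x <- S) delta x (c x) y by rewrite {1}Ec.
rewrite E3 E4 E5 -big_split -sumrB /=; apply: eq_bigr => x _.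
case: (eqVneq (c x) 0) => [->|cx].
  by rewrite Kf_zero VRbd_zero delta_zero VRbd_zero Dfun_zero IP_zero !subr0 addr0.
have sx := cE _ cx; set a := c x; set d := delta x a.
have fd : fin_supp d by apply: delta_fin.
have dE : forall z, d z != 0 -> VRsimplex (E0 adj) z by apply: delta_E0.
have Ew : VRbd (fun z => d z - IP adj d z - @Dfun m (VRbd d) z) = fun _ => 0.
  change (VRbd (chain_sub (chain_sub d (IP adj d)) (@Dfun m (VRbd d))) = fun _ => 0).
  rewrite VRbd_sub; last by apply/Dfun_fin/VRbd_fin.
    rewrite VRbd_sub //; last exact: IP_fin.
    rewrite (IP_bd adj_sym fd dE) HC //.
    by apply: funext => z; rewrite /chain_sub subrr.
  by apply: sub_fin => //; apply: IP_fin.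
rewrite /Kf cone_bd Ew cone_zero /chain_sub subr0.
by rewrite subrK.
Qed.

Lemma C_of_H m : Hm m -> Cg m.+1.
Proof.
move=> HH x a sx; set b := VRbd (delta x a).
have fb : fin_supp b by apply/VRbd_fin/delta_fin.
have bE : forall y, b y != 0 -> VRsimplex (E0 adj) y.
  move=> y /VRbd_supp [i [v H]]; apply: (simplex_sub sx) => k.
  have := H; rewrite /delta; case: (eqVneq (tins i v y) x) => [e _|]; last by rewrite eqxx.
  by rewrite -e -(tins_lift i v) mem_tnth.
apply: funext => y; have := HH b fb bE y.
rewrite /b bdbd_delta Dfun_zero addr0 => ->; by [].
Qed.

Lemma Hall m : Hm m.
Proof.
suff : Cg m /\ Hm m by case.
elim: m => [|m [_ IH]]; first by split; [exact: Cg0 | apply: H_of_C; exact: Cg0].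
have C1 := C_of_H IH; split => //; exact: H_of_C.
Qed.

Lemma homotopy n (z : n.+1.-tuple T -> A) : fin_supp z ->
  (forall x, z x != 0 -> VRsimplex (E0 adj) x) -> is_cycle (@VRbd T A) z ->
  chain_sub z (IP adj z) = VRbd (@Dfun n z).
Proof.
case: n z => [|m] z fz zE cz; first by rewrite C0.
apply: funext => y; have := Hall fz zE y.
move: cz; rewrite /is_cycle => ->; rewrite Dfun_zero addr0 => ->; by [].
Qed.

End Homotopy.

Section Final.
Variable V : Type.
Local Notation T := {classic V}.
Variable adj : V -> V -> Prop.
Hypothesis adj_sym : forall x y, adj x y -> adj y x.
Variable A : zmodType.

Lemma iota_sub n (c c' : n.+1.-tuple T -> A) :
  iota (chain_sub c c') = chain_sub (iota c) (iota c').
Proof. by apply: funext => x; rewrite /iota /chain_sub; case: ifP; rewrite ?subr0. Qed.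

Lemma iota_add n (c c' : n.+1.-tuple T -> A) :
  iota (chain_add c c') = chain_add (iota c) (iota c').
Proof. by apply: funext => x; rewrite /iota /chain_add; case: ifP; rewrite ?addr0. Qed.

Lemma iota_zero n : iota (fun _ : n.+1.-tuple T => 0 : A) = fun _ => 0.
Proof. by apply: funext => x; rewrite /iota if_same. Qed.

Lemma piC_sub n (c c' : n.+1.-tuple T -> A) :
  piC adj (chain_sub c c') = chain_sub (piC adj c) (piC adj c').
Proof.
apply: funext => x; rewrite /piC /chain_sub; case: ifP => _; last by rewrite subr0.
by rewrite -sumrB; apply: eq_bigr => s _; rewrite signzB.
Qed.

Lemma piC_zero n : piC adj (fun _ : n.+1.-tuple T => 0 : A) = fun _ => 0.
Proof.
apply: funext => x; rewrite /piC; case: ifP => // _.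
by apply: big1 => s _; exact: signz0.
Qed.

Lemma CLbd_zero n : CLbd (fun _ : n.+2.-tuple T => 0 : A) = fun _ => 0.
Proof. by apply: funext => y; apply: fsbig1. Qed.

Lemma VRadm_zero n U : VRadm U (fun _ : n.+1.-tuple T => 0 : A).
Proof. by split; [exact: zero_fin | move=> x; rewrite eqxx]. Qed.

Lemma CLadm_zero n : CLadm adj (fun _ : n.+1.-tuple T => 0 : A).
Proof.
split; [exact: zero_fin | by move=> x; rewrite eqxx | by move=> s x; rewrite signz0].
Qed.

Lemma VRhomol_refl n U (c : n.+1.-tuple T -> A) :
  homologous (@VRadm T A U n.+1) (@VRbd T A n) c c.
Proof.
exists (fun _ => 0); split; first exact: VRadm_zero.
by rewrite VRbd_zero; apply: funext => x; rewrite /chain_sub subrr.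
Qed.

Lemma CLhomol_refl n (c : n.+1.-tuple T -> A) :
  homologous (@CLadm T A adj n.+1) (@CLbd T A n) c c.
Proof.
exists (fun _ => 0); split; first exact: CLadm_zero.
by rewrite CLbd_zero; apply: funext => x; rewrite /chain_sub subrr.
Qed.

Lemma VRadm_mono n U U' (c : n.+1.-tuple T -> A) : VRadm U c -> U `<=` U' -> VRadm U' c.
Proof. by case=> fc H sU; split => // x /H sx i j ij; apply: sU; apply: sx. Qed.

Lemma VRadm_sub n U (c c' : n.+1.-tuple T -> A) : VRadm U c -> VRadm U c' ->
  VRadm U (chain_sub c c').
Proof.
case=> f1 H1 [f2 H2]; split; first exact: sub_fin.
move=> x; rewrite /chain_sub; case: (eqVneq (c x) 0) => [->|/H1 //].
rewrite sub0r oppr_eq0; exact: H2.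
Qed.

Lemma VRadm_E0 n (c : n.+1.-tuple T -> A) : VRadm (E0 adj) c ->
  forall x, c x != 0 -> VRsimplex (E0 adj) x.
Proof. by case. Qed.

Lemma cycle_iota n (c : n.+1.-tuple T -> A) : CLadm adj c -> is_cycle (@CLbd T A) c ->
  is_cycle (@VRbd T A) (iota c).
Proof.
case: n c => [//|m] c ac /= cc.
by rewrite (iota_bd ac) cc iota_zero.
Qed.

Lemma cycle_piC n (c : n.+1.-tuple T -> A) : VRadm (E0 adj) c -> is_cycle (@VRbd T A) c ->
  is_cycle (@CLbd T A) (piC adj c).
Proof.
case: n c => [//|m] c [fc cE] /= cc.
by rewrite -(piC_bd adj_sym fc cE) cc piC_zero.
Qed.

End Final.

Unset Implicit Arguments.

Theorem theorem5p2 (V : Type) (adj : V -> V -> Prop)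
    (adj_sym : forall x y, adj x y -> adj y x) (A : zmodType) :
  forall n : nat, sg_iso (VRhomology_graph adj A n) (VRhomology (sigmaG adj) A n).
Proof.
move=> n.
pose E := E0 adj.
have sE : sigmaG adj E by move=> x y h.
have Esub : forall U, sigmaG adj U -> E `<=` U by move=> U sU [x y] h; exact: sU.
exists (fun c (U : set (V * V)) => iota c), (fun F => piC adj (F E)).
split.
- split.
  + move=> c [ac cc]; split.
      move=> U sU; split; first exact: (iota_adm ac sU).
      exact: (cycle_iota ac cc).
    move=> U U' _ _ _; exact: VRhomol_refl.
  + move=> F [HF _]; have [aF cF] := HF E sE; split.
      by apply: piC_adm; case: aF.
    exact: cycle_piC.
- move=> c c' [ac cc] [ac' cc'] [b [ab Eb]] U sU.
  exists (iota b); split; first exact: (iota_adm ab sU).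
  by rewrite (iota_bd ab) -Eb iota_sub.
- split.
  + move=> F F' [HF _] [HF' _] HE.
    have [b [[fb bE] Eb]] := HE E sE.
    exists (piC adj b); split; first exact: (piC_adm adj fb).
    by rewrite -(piC_bd adj_sym fb bE) -Eb piC_sub.
  + move=> c c' _ _ U sU /=; rewrite iota_add; exact: VRhomol_refl.
- move=> c [ac cc] /=; rewrite (piC_iota ac); exact: CLhomol_refl.
- move=> F [HF HC] U sU /=.
  have [aE cE] := HF E sE.
  have [b1 [ab1 Eb1]] := HC U E sU sE (Esub U sU).
  have [fE eE] := aE.
  have Eh := homotopy adj_sym fE eE cE.
  set D := Dfun _ (F E) in Eh.
  have aD : VRadm U D.
    apply: (VRadm_mono _ (Esub U sU)); split; first exact: Dfun_fin.
    exact: Dfun_E0.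
  exists (chain_sub b1 D); split; first exact: VRadm_sub.
  rewrite VRbd_sub; [|by case: ab1|by case: aD].
  rewrite -Eb1 -Eh; apply: funext => x; rewrite /chain_sub /IP.
  by rewrite opprB [RHS]addrC [RHS]addrA subrK.
Qed.
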